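(* Let $E$ be a finite graph, i.e. a metric continuum that is the union of finitely many arcs $E_1,\dots,E_r$ ($r\ge1$), any two of which are either disjoint or intersect only in one or both of their end points. Then there exists an onto map $F:E\to E$ that is topologically transitive (indeed has a dense orbit) and has a dense set of periodic points; $F$ is chaotic on $E$.
   Context: A map $g$ on a metric space $(Z,d)$ is chaotic (Devaney) if it is onto, topologically transitive (for nonempty open $U,V$ there is $n>0$ with $g^n(U)\cap V\neq\emptyset$), has a dense set of periodic points, and is sensitive to initial conditions (there is $\eta>0$ such that for every $x$ and every neighbourhood $N$ of $x$ there are $y\in N$ and $n\ge0$ with $d(g^n(x),g^n(y))>\eta$). An arc is a space homeomorphic to $[0,1]$; its end points are the images of $0$ and $1$. *)

(* Defs.v *)
From Stdlib Require Import Reals List.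
Open Scope R_scope.

Definition is_metric {X : Type} (d : X -> X -> R) : Prop :=
  (forall x y, 0 <= d x y) /\
  (forall x y, d x y = 0 <-> x = y) /\
  (forall x y, d x y = d y x) /\
  (forall x y z, d x z <= d x y + d y z).

Definition is_open {X : Type} (d : X -> X -> R) (U : X -> Prop) : Prop :=
  forall x, U x -> exists eps, 0 < eps /\ forall y, d x y < eps -> U y.

Definition is_nbhd {X : Type} (d : X -> X -> R) (x : X) (N : X -> Prop) : Prop :=
  exists eps, 0 < eps /\ forall y, d x y < eps -> N y.

Definition is_compact {X : Type} (d : X -> X -> R) : Prop :=
  forall (I : Type) (U : I -> X -> Prop),
    (forall i, is_open d (U i)) -> (forall x, exists i, U i x) ->
    exists l : list I, forall x, exists i, In i l /\ U i x.

Definition is_connected {X : Type} (d : X -> X -> R) : Prop :=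
  forall U V : X -> Prop, is_open d U -> is_open d V ->
    (forall x, U x \/ V x) -> (forall x, ~ (U x /\ V x)) ->
    (forall x, U x) \/ (forall x, V x).

Definition is_continuum {X : Type} (d : X -> X -> R) : Prop :=
  is_metric d /\ (exists x : X, True) /\ is_compact d /\ is_connected d.

Definition continuous {X : Type} (d : X -> X -> R) (f : X -> X) : Prop :=
  forall x eps, 0 < eps -> exists delta, 0 < delta /\
    forall y, d x y < delta -> d (f x) (f y) < eps.

(* A is an arc with end points a = h 0 and b = h 1, where h : [0,1] -> A is a
   homeomorphism with inverse g. *)
Definition is_arc_with {X : Type} (d : X -> X -> R) (A : X -> Prop) (a b : X) : Prop :=
  exists (h : R -> X) (g : X -> R),
    (forall t, 0 <= t <= 1 -> A (h t)) /\
    (forall x, A x -> 0 <= g x <= 1) /\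
    (forall t, 0 <= t <= 1 -> g (h t) = t) /\
    (forall x, A x -> h (g x) = x) /\
    (forall t eps, 0 <= t <= 1 -> 0 < eps -> exists delta, 0 < delta /\
       forall s, 0 <= s <= 1 -> Rabs (s - t) < delta -> d (h t) (h s) < eps) /\
    (forall x eps, A x -> 0 < eps -> exists delta, 0 < delta /\
       forall y, A y -> d x y < delta -> Rabs (g y - g x) < eps) /\
    h 0 = a /\ h 1 = b.

Definition is_finite_graph {X : Type} (d : X -> X -> R) : Prop :=
  exists (r : nat) (E : nat -> X -> Prop) (a b : nat -> X),
    (1 <= r)%nat /\
    (forall i, (i < r)%nat -> is_arc_with d (E i) (a i) (b i)) /\
    (forall x, exists i, (i < r)%nat /\ E i x) /\
    (forall i j x, (i < r)%nat -> (j < r)%nat -> i <> j -> E i x -> E j x ->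
       (x = a i \/ x = b i) /\ (x = a j \/ x = b j)).

Fixpoint iter {X : Type} (n : nat) (f : X -> X) (x : X) : X :=
  match n with O => x | S k => f (iter k f x) end.

Definition onto {X : Type} (f : X -> X) : Prop := forall y, exists x, f x = y.

Definition top_transitive {X : Type} (d : X -> X -> R) (f : X -> X) : Prop :=
  forall U V : X -> Prop, is_open d U -> is_open d V ->
    (exists u, U u) -> (exists v, V v) ->
    exists n, (0 < n)%nat /\ exists u, U u /\ V (iter n f u).

Definition has_dense_orbit {X : Type} (d : X -> X -> R) (f : X -> X) : Prop :=
  exists x, forall U : X -> Prop, is_open d U -> (exists u, U u) ->
    exists n, U (iter n f x).

Definition periodic {X : Type} (f : X -> X) (x : X) : Prop :=
  exists n, (0 < n)%nat /\ iter n f x = x.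

Definition dense_periodic {X : Type} (d : X -> X -> R) (f : X -> X) : Prop :=
  forall U : X -> Prop, is_open d U -> (exists u, U u) ->
    exists x, U x /\ periodic f x.

Definition sensitive {X : Type} (d : X -> X -> R) (f : X -> X) : Prop :=
  exists eta, 0 < eta /\ forall x N, is_nbhd d x N ->
    exists y n, N y /\ d (iter n f x) (iter n f y) > eta.

Definition chaotic {X : Type} (d : X -> X -> R) (f : X -> X) : Prop :=
  onto f /\ top_transitive d f /\ dense_periodic d f /\ sensitive d f.

(* Main.v *)
Require Import Defs.
From Stdlib Require Import Reals List.
From Stdlib Require Import Cantor Lra Lia ClassicalEpsilon Classical.
Open Scope R_scope.

Section Met.
Variable X : Type.
Variable d : X -> X -> R.
Hypothesis Hm : is_metric d.

Lemma d_pos x y : 0 <= d x y.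
Proof. destruct Hm as [H _]; apply H. Qed.
Lemma d_sym x y : d x y = d y x.
Proof. destruct Hm as [_ [_ [H _]]]; apply H. Qed.
Lemma d_tri x y z : d x z <= d x y + d y z.
Proof. destruct Hm as [_ [_ [_ H]]]; apply H. Qed.
Lemma d_refl x : d x x = 0.
Proof. destruct Hm as [_ [H _]]; apply H; reflexivity. Qed.
Lemma d_eq0 x y : d x y = 0 -> x = y.
Proof. destruct Hm as [_ [H _]]; apply H. Qed.
Lemma d_neq x y : x <> y -> 0 < d x y.
Proof. intros H. destruct (d_pos x y) as [H1|H1]; auto. exfalso; apply H, d_eq0; auto. Qed.

Lemma finite_delta (Q : nat -> R -> Prop) n :
  (forall j a b, Q j a -> 0 < b -> b <= a -> Q j b) ->
  (forall j, (j < n)%nat -> exists a, 0 < a /\ Q j a) ->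
  exists a, 0 < a /\ forall j, (j < n)%nat -> Q j a.
Proof.
  intros Hmon. induction n as [|n IH]; intros H.
  - exists 1; split; [lra|intros; lia].
  - destruct IH as [a [Ha HQ]]. { intros j Hj; apply H; lia. }
    destruct (H n) as [b [Hb HQb]]; [lia|].
    exists (Rmin a b); split. { apply Rmin_pos; auto. }
    intros j Hj. destruct (Nat.eq_dec j n) as [->|Hn].
    + apply Hmon with b; auto. apply Rmin_pos; auto. apply Rmin_r.
    + apply Hmon with a; auto. apply HQ; lia. apply Rmin_pos; auto. apply Rmin_l.
Qed.

Definition cl01 t := Rmax 0 (Rmin 1 t).
Lemma cl01_id t : 0 <= t <= 1 -> cl01 t = t.
Proof. intros. unfold cl01, Rmax, Rmin. repeat destruct Rle_dec; lra. Qed.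
Lemma cl01_rng t : 0 <= cl01 t <= 1.
Proof. unfold cl01, Rmax, Rmin. repeat destruct Rle_dec; lra. Qed.
Lemma cl01_lip t c : 0 <= c <= 1 -> Rabs (cl01 t - c) <= Rabs (t - c).
Proof. intros. unfold cl01, Rmax, Rmin. repeat destruct Rle_dec;
  unfold Rabs; repeat destruct Rcase_abs; lra. Qed.

Lemma d_diff x a b : Rabs (d x a - d x b) <= d a b.
Proof.
  pose proof (d_tri x a b). pose proof (d_tri x b a). rewrite (d_sym b a) in H0.
  unfold Rabs; destruct Rcase_abs; lra.
Qed.

Lemma away (h : R -> X) (A : X -> Prop) x :
  (forall t eps, 0 <= t <= 1 -> 0 < eps -> exists delta, 0 < delta /\
       forall s, 0 <= s <= 1 -> Rabs (s - t) < delta -> d (h t) (h s) < eps) ->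
  (forall y, A y -> exists t, 0 <= t <= 1 /\ h t = y) ->
  (forall t, 0 <= t <= 1 -> h t <> x) ->
  exists a, 0 < a /\ forall y, A y -> a <= d x y.
Proof.
  intros hc hA hx.
  set (f := fun t => d x (h (cl01 t))).
  destruct (continuity_ab_min f 0 1) as [mx [Hmin Hmx]]. lra.
  { intros c Hc. unfold continuity_pt, continue_in, limit1_in, limit_in. simpl.
    unfold R_dist. intros eps Heps.
    destruct (hc c eps Hc Heps) as [del [Hdel Hh]].
    exists del; split; auto. intros y [_ Hy].
    unfold f. rewrite (cl01_id c Hc).
    eapply Rle_lt_trans. apply d_diff. rewrite d_sym.
    apply Hh. apply cl01_rng. eapply Rle_lt_trans. apply cl01_lip; auto. auto. }
  exists (f mx). split.
  - unfold f. apply d_neq. intro E. apply (hx (cl01 mx)). apply cl01_rng. auto.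
  - intros y Hy. destruct (hA y Hy) as [t [Ht <-]].
    specialize (Hmin t Ht). unfold f in Hmin. rewrite (cl01_id t Ht) in Hmin; auto.
Qed.

End Met.

Lemma iter_S_r {T : Type} n (f : T -> T) x : iter (S n) f x = iter n f (f x).
Proof. induction n; simpl in *; auto. rewrite <- IHn. auto. Qed.

Lemma approx_nat m : forall x, 0 <= x <= INR (S m) -> exists j, (j <= m)%nat /\ INR j <= x <= INR j + 1.
Proof.
  induction m as [|m IH]; intros x Hx.
  - exists O. simpl in *. split; [lia|lra].
  - destruct (Rle_dec x (INR (S m))) as [H|H].
    + destruct (IH x) as [j [Hj Hj']]. lra. exists j; split; [lia|auto].
    + exists (S m). split; [lia|]. rewrite (S_INR (S m)) in Hx. lra.
Qed.

Section Graph.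
Variable X : Type.
Variable d : X -> X -> R.
Hypothesis Hm : is_metric d.
Hypothesis Hconn : is_connected d.
Variable r : nat.
Variable E : nat -> X -> Prop.
Variable h : nat -> R -> X.
Variable g : nat -> X -> R.
Hypothesis r1 : (1 <= r)%nat.
Hypothesis hE : forall i t, (i < r)%nat -> 0 <= t <= 1 -> E i (h i t).
Hypothesis gE : forall i x, (i < r)%nat -> E i x -> 0 <= g i x <= 1.
Hypothesis gh : forall i t, (i < r)%nat -> 0 <= t <= 1 -> g i (h i t) = t.
Hypothesis hg : forall i x, (i < r)%nat -> E i x -> h i (g i x) = x.
Hypothesis hc : forall i t eps, (i < r)%nat -> 0 <= t <= 1 -> 0 < eps -> exists delta, 0 < delta /\
       forall s, 0 <= s <= 1 -> Rabs (s - t) < delta -> d (h i t) (h i s) < eps.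
Hypothesis gc : forall i x eps, (i < r)%nat -> E i x -> 0 < eps -> exists delta, 0 < delta /\
       forall y, E i y -> d x y < delta -> Rabs (g i y - g i x) < eps.
Hypothesis cover : forall x, exists i, (i < r)%nat /\ E i x.
Hypothesis inter : forall i j x, (i < r)%nat -> (j < r)%nat -> i <> j -> E i x -> E j x ->
       (x = h i 0 \/ x = h i 1) /\ (x = h j 0 \/ x = h j 1).

Lemma away_edge j x : (j < r)%nat -> ~ E j x ->
  exists a, 0 < a /\ forall y, E j y -> a <= d x y.
Proof.
  intros Hj Hx. apply (away X d Hm (h j) (E j) x).
  - intros; apply hc; auto.
  - intros y Hy. exists (g j y). split; auto.
  - intros t Ht E1. apply Hx. rewrite <- E1. auto.
Qed.

Lemma away_multi (P : nat -> Prop) x :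
  (forall j, (j < r)%nat -> P j -> ~ E j x) ->
  exists a, 0 < a /\ forall j y, (j < r)%nat -> P j -> E j y -> a <= d x y.
Proof.
  intros H.
  destruct (finite_delta (fun j a => P j -> forall y, E j y -> a <= d x y) r) as [a [Ha Hq]].
  - intros j a b H1 Hb Hba Hp y Hy. specialize (H1 Hp y Hy). lra.
  - intros j Hj. destruct (classic (P j)) as [Hp|Hp].
    + destruct (away_edge j x Hj (H j Hj Hp)) as [a [Ha Ha']]. exists a; auto.
    + exists 1; split; [lra|]. intros; contradiction.
  - exists a; split; auto. intros j y Hj Hp Hy. apply (Hq j Hj Hp y Hy).
Qed.

Definition orr (o : bool) (s : R) := if o then s else 1 - s.
Lemma orr_rng o s : 0 <= s <= 1 -> 0 <= orr o s <= 1.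
Proof. destruct o; simpl; lra. Qed.
Lemma orr_inv o s : orr o (orr o s) = s.
Proof. destruct o; simpl; lra. Qed.
Definition seg (p : nat * bool) (u : R) := h (fst p) (orr (snd p) u).

Definition walk_ok (w : nat -> nat * bool) (M : nat) :=
  (2 <= M)%nat /\ (forall k, (k < M)%nat -> (fst (w k) < r)%nat) /\
  (forall k, (S k < M)%nat -> seg (w k) 1 = seg (w (S k)) 0) /\
  seg (w (M - 1)%nat) 1 = seg (w O) 0.

Definition covered (w : nat -> nat * bool) (M : nat) i := exists k, (k < M)%nat /\ fst (w k) = i.

Lemma conn_lemma w M j0 : walk_ok w M -> (j0 < r)%nat -> ~ covered w M j0 ->
  exists j k x, (j < r)%nat /\ (k < r)%nat /\ ~ covered w M j /\ covered w M k /\ E j x /\ E k x.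
Proof.
  intros Hw Hj0 Hnc. apply NNPP. intros Hno.
  set (U := fun x => exists k, (k < r)%nat /\ covered w M k /\ E k x).
  set (V := fun x => exists j, (j < r)%nat /\ ~ covered w M j /\ E j x).
  assert (Hdis : forall x, ~ (U x /\ V x)).
  { intros x [[k [Hk [Hck Hek]]] [j [Hj [Hcj Hej]]]]. apply Hno. exists j, k, x. tauto. }
  assert (Hcov : forall x, U x \/ V x).
  { intros x. destruct (cover x) as [i [Hi Hei]]. destruct (classic (covered w M i)).
    left; exists i; auto. right; exists i; auto. }
  destruct (Hconn U V) as [HU|HV].
  - intros x [k [Hk [Hck Hek]]].
    destruct (away_multi (fun j => ~ covered w M j) x) as [a [Ha Ha']].
    { intros j Hj Hcj Hej. apply Hno. exists j, k, x. tauto. }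
    exists a; split; auto. intros y Hy.
    destruct (cover y) as [i [Hi Hei]]. destruct (classic (covered w M i)).
    + exists i; auto.
    + specialize (Ha' i y Hi H Hei). lra.
  - intros x [k [Hk [Hck Hek]]].
    destruct (away_multi (fun j => covered w M j) x) as [a [Ha Ha']].
    { intros j Hj Hcj Hej. apply Hno. exists k, j, x. tauto. }
    exists a; split; auto. intros y Hy.
    destruct (cover y) as [i [Hi Hei]]. destruct (classic (covered w M i)).
    + specialize (Ha' i y Hi H Hei). lra.
    + exists i; auto.
  - exact Hcov.
  - exact Hdis.
  - apply (Hdis (h j0 0)). split; auto. exists j0. split; auto. split; auto. apply hE; auto; lra.
  - destruct Hw as [HM [Hr _]].
    apply (Hdis (h (fst (w O)) 0)). split; auto. exists (fst (w O)). split. apply Hr; lia.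
    split. exists O; split; auto; lia. apply hE. apply Hr; lia. lra.
Qed.


Definition ins (w : nat -> nat * bool) (q : nat) (p : nat * bool) (k : nat) :=
  if (k <? q)%nat then w k else if (k =? q)%nat then p
  else if (k =? S q)%nat then (fst p, negb (snd p)) else w (k - 2)%nat.
Lemma ins_lt w q p k : (k < q)%nat -> ins w q p k = w k.
Proof. intros. unfold ins. destruct (Nat.ltb_spec k q); [auto|lia]. Qed.
Lemma ins_q w q p : ins w q p q = p.
Proof. unfold ins. destruct (Nat.ltb_spec q q); [lia|]. rewrite Nat.eqb_refl; auto. Qed.
Lemma ins_Sq w q p : ins w q p (S q) = (fst p, negb (snd p)).
Proof. unfold ins. destruct (Nat.ltb_spec (S q) q); [lia|].
  destruct (Nat.eqb_spec (S q) q); [lia|]. rewrite Nat.eqb_refl; auto. Qed.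
Lemma ins_gt w q p k : (S q < k)%nat -> ins w q p k = w (k - 2)%nat.
Proof. intros. unfold ins. destruct (Nat.ltb_spec k q); [lia|].
  destruct (Nat.eqb_spec k q); [lia|]. destruct (Nat.eqb_spec k (S q)); [lia|]. auto. Qed.

Lemma seg_flip1 j o : seg (j, o) 1 = seg (j, negb o) 0.
Proof. unfold seg, orr; destruct o; simpl; f_equal; lra. Qed.
Lemma seg_flip2 j o : seg (j, negb o) 1 = seg (j, o) 0.
Proof. unfold seg, orr; destruct o; simpl; f_equal; lra. Qed.

Lemma insert_walk w M q x j o : walk_ok w M -> (q <= M)%nat -> (j < r)%nat ->
  x = (if (q <? M)%nat then seg (w q) 0 else seg (w O) 0) -> seg (j, o) 0 = x ->
  walk_ok (ins w q (j, o)) (M + 2) /\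
  (forall i, covered w M i -> covered (ins w q (j, o)) (M + 2) i) /\
  covered (ins w q (j, o)) (M + 2) j.
Proof.
  intros [HM [Hr [Hch Hcl]]] Hq Hj Hx Hjo.
  assert (Hnode : forall k, (S k = q)%nat -> seg (w k) 1 = x).
  { intros k Hk. rewrite Hx. destruct (Nat.ltb_spec q M).
    - subst q. apply Hch; lia.
    - replace k with (M - 1)%nat by lia. auto. }
  split; [|split].
  - split; [lia|split; [|split]].
    + intros k Hk. destruct (Nat.lt_ge_cases k q).
      * rewrite ins_lt; auto. apply Hr; lia.
      * destruct (Nat.eq_dec k q) as [->|]. rewrite ins_q; auto.
        destruct (Nat.eq_dec k (S q)) as [->|]. rewrite ins_Sq; auto.
        rewrite ins_gt by lia. apply Hr; lia.
    + intros k Hk. destruct (Nat.lt_ge_cases (S k) q).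
      * rewrite !ins_lt by lia. apply Hch; lia.
      * destruct (Nat.eq_dec (S k) q) as [Hk'|].
        { rewrite ins_lt by lia. rewrite <- Hk', ins_q. rewrite Hjo. apply Hnode; auto. }
        destruct (Nat.eq_dec k q) as [->|].
        { rewrite ins_q, ins_Sq. apply seg_flip1. }
        destruct (Nat.eq_dec k (S q)) as [->|].
        { rewrite ins_Sq, (ins_gt w q (j,o) (S (S q))) by lia. simpl.
          rewrite seg_flip2, Hjo, Hx.
          rewrite Nat.sub_0_r. destruct (Nat.ltb_spec q M); [auto|lia]. }
        rewrite !ins_gt by lia. replace (S k - 2)%nat with (S (k - 2)) by lia. apply Hch; lia.
    + destruct (Nat.eq_dec q M) as [->|Hne].
      * replace (M + 2 - 1)%nat with (S M) by lia. rewrite ins_Sq, ins_lt by lia. simpl.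
        rewrite seg_flip2, Hjo, Hx. destruct (Nat.ltb_spec M M); [lia|auto].
      * rewrite (ins_gt w q (j,o) (M + 2 - 1)) by lia. replace (M + 2 - 1 - 2)%nat with (M - 1)%nat by lia.
        rewrite Hcl. destruct (Nat.eq_dec q O) as [->|].
        { rewrite ins_q, Hjo, Hx. destruct (Nat.ltb_spec 0 M); [auto|lia]. }
        rewrite ins_lt by lia. auto.
  - intros i [k [Hk Hi]]. destruct (Nat.lt_ge_cases k q).
    + exists k. split; [lia|]. rewrite ins_lt; auto.
    + exists (k + 2)%nat. split; [lia|]. rewrite ins_gt by lia. replace (k + 2 - 2)%nat with k by lia. auto.
  - exists q. split; [lia|]. rewrite ins_q. auto.
Qed.

Lemma walk_step w M : walk_ok w M -> ~ (forall i, (i < r)%nat -> covered w M i) ->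
  exists w' M', walk_ok w' M' /\ (forall i, covered w M i -> covered w' M' i) /\
   exists j, (j < r)%nat /\ ~ covered w M j /\ covered w' M' j.
Proof.
  intros Hw Hn. apply not_all_ex_not in Hn. destruct Hn as [j0 Hj0].
  apply imply_to_and in Hj0. destruct Hj0 as [Hj0 Hnc].
  destruct (conn_lemma w M j0 Hw Hj0 Hnc) as [j [k [x [Hj [Hk [Hcj [Hck [Hej Hek]]]]]]]].
  assert (Hjk : j <> k). { intros ->. contradiction. }
  destruct (inter j k x Hj Hk Hjk Hej Hek) as [Hxj Hxk].
  destruct Hck as [p [Hp Hfp]].
  assert (Hq : exists q, (q <= M)%nat /\ x = (if (q <? M)%nat then seg (w q) 0 else seg (w O) 0)).
  { assert (H01 : x = seg (w p) 0 \/ x = seg (w p) 1).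
    { unfold seg, orr. rewrite Hfp. destruct (snd (w p)).
      - destruct Hxk; [left|right]; auto.
      - replace (1 - 0) with 1 by lra. replace (1 - 1) with 0 by lra. destruct Hxk; [right|left]; auto. }
    destruct Hw as [HM [Hr [Hch Hcl]]].
    destruct H01 as [H0|H1].
    - exists p. split; [lia|]. destruct (Nat.ltb_spec p M); [auto|lia].
    - destruct (Nat.lt_ge_cases (S p) M).
      + exists (S p). split; [lia|]. destruct (Nat.ltb_spec (S p) M); [|lia]. rewrite H1. apply Hch; auto.
      + exists M. split; [lia|]. destruct (Nat.ltb_spec M M); [lia|]. rewrite H1, <- Hcl.
        replace (M - 1)%nat with p by lia. auto. }
  destruct Hq as [q [Hq Hxq]].
  assert (Ho : exists o, seg (j, o) 0 = x).
  { destruct Hxj as [H|H]; [exists true|exists false]; unfold seg, orr; simpl; rewrite H; f_equal; lra. }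
  destruct Ho as [o Ho].
  destruct (insert_walk w M q x j o Hw Hq Hj Hxq Ho) as [A [B C]].
  exists (ins w q (j, o)), (M + 2)%nat. split; auto. split; auto. exists j; auto.
Qed.

Lemma walk_exists_n n : exists w M, walk_ok w M /\
  ((forall i, (i < r)%nat -> covered w M i) \/
   exists L, NoDup L /\ length L = n /\ forall i, In i L -> (i < r)%nat /\ covered w M i).
Proof.
  induction n as [|n IH].
  - exists (fun k => if (k =? 0)%nat then (O, true) else (O, false)), 2%nat.
    split.
    + split; [lia|split; [|split]].
      * intros k _. destruct (k =? 0)%nat; simpl; lia.
      * intros k Hk. assert (k = O) by lia. subst. simpl. unfold seg, orr; simpl. f_equal; lra.
      * simpl. unfold seg, orr; simpl. f_equal; lra.
    + right. exists nil. split; [constructor|split; auto]. intros i [].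
  - destruct IH as [w [M [Hw [Hall|[L [HL [Hlen HLc]]]]]]].
    + exists w, M. auto.
    + destruct (classic (forall i, (i < r)%nat -> covered w M i)) as [Hall|Hn].
      * exists w, M. auto.
      * destruct (walk_step w M Hw Hn) as [w' [M' [Hw' [Hmono [j [Hj [Hnj Hcj]]]]]]].
        exists w', M'. split; auto. right. exists (j :: L). split; [|split].
        -- constructor; auto. intros Hin. apply Hnj. apply HLc; auto.
        -- simpl; lia.
        -- intros i [<-|Hi]. auto. destruct (HLc i Hi). auto.
Qed.

Lemma walk_exists : exists w M, walk_ok w M /\ (forall i, (i < r)%nat -> covered w M i).
Proof.
  destruct (walk_exists_n (S r)) as [w [M [Hw [Hall|[L [HL [Hlen HLc]]]]]]].
  - exists w, M; auto.
  - exfalso. assert (length L <= length (seq 0 r))%nat.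
    { apply NoDup_incl_length; auto. intros i Hi. apply in_seq. destruct (HLc i Hi). lia. }
    rewrite length_seq in H. lia.
Qed.

Lemma seg_cont p t eps : (fst p < r)%nat -> 0 <= t <= 1 -> 0 < eps ->
  exists delta, 0 < delta /\ forall s, 0 <= s <= 1 -> Rabs (s - t) < delta -> d (seg p t) (seg p s) < eps.
Proof.
  intros Hp Ht He. destruct (hc (fst p) (orr (snd p) t) eps Hp (orr_rng _ _ Ht) He) as [del [Hd Hh]].
  exists del; split; auto. intros s Hs Hst. unfold seg. apply Hh. apply orr_rng; auto.
  destruct (snd p); simpl; auto. replace (1 - s - (1 - t)) with (- (s - t)) by ring. rewrite Rabs_Ropp; auto.
Qed.

Section Dyn.
Variable w : nat -> nat * bool.
Variable M : nat.
Hypothesis Hw : walk_ok w M.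
Hypothesis Hcov : forall i, (i < r)%nat -> covered w M i.

Lemma HM2 : (2 <= M)%nat. Proof. destruct Hw; auto. Qed.
Lemma Hwr k : (k < M)%nat -> (fst (w k) < r)%nat. Proof. destruct Hw as [_ [H _]]; auto. Qed.
Lemma Hwch k : (S k < M)%nat -> seg (w k) 1 = seg (w (S k)) 0. Proof. destruct Hw as [_ [_ [H _]]]; auto. Qed.
Lemma Hwcl : seg (w (M - 1)%nat) 1 = seg (w O) 0. Proof. destruct Hw as [_ [_ [_ H]]]; auto. Qed.
Lemma MRpos : 0 < INR M. Proof. apply lt_0_INR. pose proof HM2; lia. Qed.

Fixpoint Wr (n k : nat) (t : R) : X :=
  match n with O => seg (w k) t | S n' => if Rle_dec t 1 then seg (w k) t else Wr n' (S k) (t - 1) end.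

Lemma Wr_piece n : forall k p u, (p <= n)%nat -> (k + n < M)%nat -> 0 <= u <= 1 ->
  Wr n k (INR p + u) = seg (w (k + p)%nat) u.
Proof.
  induction n as [|n IH]; intros k p u Hp Hk Hu.
  - assert (p = O) by lia. subst. simpl. rewrite Nat.add_0_r. f_equal; lra.
  - simpl. destruct p as [|p].
    + simpl. rewrite Nat.add_0_r. destruct Rle_dec; [f_equal; lra|lra].
    + rewrite S_INR. destruct Rle_dec as [Hle|Hle].
      * destruct p as [|p]. 2:{ rewrite S_INR in Hle. pose proof (pos_INR p). lra. }
        simpl in Hle. assert (u = 0) by lra. subst u. simpl.
        replace (0 + 1 + 0) with 1 by lra. replace (k + 1)%nat with (S k) by lia. apply Hwch. lia.
      * replace (INR p + 1 + u - 1) with (INR p + u) by ring.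
        rewrite IH; [f_equal; f_equal; lia|lia|lia|auto].
Qed.

Lemma Wr_cont n : forall k t eps, (k + n < M)%nat -> 0 <= t <= INR n + 1 -> 0 < eps ->
  exists delta, 0 < delta /\ forall s, 0 <= s <= INR n + 1 -> Rabs (s - t) < delta ->
   d (Wr n k t) (Wr n k s) < eps.
Proof.
  induction n as [|n IH]; intros k t eps Hk Ht He.
  - simpl in *. replace (0 + 1) with 1 in * by ring. apply seg_cont; auto. apply Hwr; lia.
  - rewrite S_INR in *. simpl Wr. destruct (Rle_dec t 1) as [Ht1|Ht1].
    + destruct (Rle_lt_or_eq_dec t 1 Ht1) as [Hlt|Heq].
      * destruct (seg_cont (w k) t eps) as [d1 [Hd1 H1]]; auto. apply Hwr; lia. lra.
        exists (Rmin d1 (1 - t)). split. apply Rmin_pos; lra.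
        intros s Hs Hst. assert (Hs1 : s < 1).
        { pose proof (Rmin_r d1 (1 - t)). unfold Rabs in Hst; destruct Rcase_abs in Hst; lra. }
        destruct (Rle_dec s 1); [|lra]. apply H1. lra. pose proof (Rmin_l d1 (1-t)); lra.
      * subst t. destruct (seg_cont (w k) 1 eps) as [d1 [Hd1 H1]]; auto. apply Hwr; lia. lra.
        destruct (IH (S k) 0 eps) as [d2 [Hd2 H2]]; auto. lia. pose proof (pos_INR n); lra.
        exists (Rmin d1 d2). split. apply Rmin_pos; lra.
        intros s Hs Hst. pose proof (Rmin_l d1 d2). pose proof (Rmin_r d1 d2).
        destruct (Rle_dec s 1) as [Hs1|Hs1].
        -- apply H1. lra. lra.
        -- assert (E0 : Wr n (S k) 0 = seg (w k) 1).
           { replace 0 with (INR 0 + 0) by (simpl; ring). rewrite Wr_piece; [|lia|lia|lra].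
             rewrite Nat.add_0_r. symmetry; apply Hwch; lia. }
           rewrite <- E0. apply H2. lra.
           replace (s - 1 - 0) with (s - 1) by ring. rewrite Rabs_right by lra.
           rewrite Rabs_right in Hst by lra. lra.
    + destruct (IH (S k) (t - 1) eps) as [d2 [Hd2 H2]]; auto. lia. lra.
      exists (Rmin d2 (t - 1)). split. apply Rmin_pos; lra.
      intros s Hs Hst. pose proof (Rmin_l d2 (t - 1)). pose proof (Rmin_r d2 (t - 1)).
      assert (Hs1 : 1 < s). { unfold Rabs in Hst; destruct Rcase_abs in Hst; lra. }
      destruct (Rle_dec s 1); [lra|]. apply H2. lra.
      replace (s - 1 - (t - 1)) with (s - t) by ring. lra.
Qed.

Definition W (t : R) : X := Wr (M - 1) O (INR M * t).

Lemma INR_Mm1 : INR (M - 1) + 1 = INR M.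
Proof. rewrite minus_INR. simpl. ring. pose proof HM2; lia. Qed.

Lemma W_piece p u : (p < M)%nat -> 0 <= u <= 1 -> W ((INR p + u) / INR M) = seg (w p) u.
Proof.
  intros Hp Hu. unfold W. pose proof MRpos.
  replace (INR M * ((INR p + u) / INR M)) with (INR p + u) by (field; lra).
  rewrite Wr_piece; [auto|lia|lia|auto].
Qed.

Lemma W_cont t eps : 0 <= t <= 1 -> 0 < eps ->
  exists delta, 0 < delta /\ forall s, 0 <= s <= 1 -> Rabs (s - t) < delta -> d (W t) (W s) < eps.
Proof.
  intros Ht He. pose proof MRpos. pose proof INR_Mm1.
  destruct (Wr_cont (M - 1) O (INR M * t) eps) as [d1 [Hd1 H1]]; auto.
  pose proof HM2; lia. split. nra. nra.
  exists (d1 / INR M). split. apply Rdiv_lt_0_compat; lra.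
  intros s Hs Hst. unfold W. apply H1. split; nra.
  replace (INR M * s - INR M * t) with (INR M * (s - t)) by ring.
  rewrite Rabs_mult, Rabs_right by lra.
  apply Rmult_lt_compat_l with (r := INR M) in Hst; auto.
  replace (INR M * (d1 / INR M)) with d1 in Hst by (field; lra). lra.
Qed.

Definition v0 := seg (w O) 0.
Lemma W0 : W 0 = v0.
Proof. unfold v0. rewrite <- W_piece. f_equal. simpl. pose proof MRpos. field. lra.
  pose proof HM2; lia. lra. Qed.
Lemma W1 : W 1 = v0.
Proof. unfold v0. rewrite <- Hwcl. rewrite <- W_piece. f_equal. rewrite INR_Mm1.
  pose proof MRpos. field. lra. pose proof HM2; lia. lra. Qed.

Lemma W_edge i t : (i < r)%nat -> 0 <= t <= 1 -> exists tau, 0 <= tau <= 1 /\ W tau = h i t.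
Proof.
  intros Hi Ht. destruct (Hcov i Hi) as [p [Hp Hfp]].
  exists ((INR p + orr (snd (w p)) t) / INR M). pose proof MRpos.
  assert (0 <= orr (snd (w p)) t <= 1) by (apply orr_rng; auto).
  assert (INR p + 1 <= INR M). { rewrite <- S_INR. apply le_INR. lia. }
  split. split. apply Rmult_le_pos. pose proof (pos_INR p); lra. left; apply Rinv_0_lt_compat; lra.
  apply Rmult_le_reg_r with (INR M); auto. unfold Rdiv. rewrite Rmult_assoc, Rinv_l by lra. lra.
  rewrite W_piece by auto. unfold seg. rewrite orr_inv, Hfp. auto.
Qed.

Lemma W_onto y : exists tau, 0 <= tau <= 1 /\ W tau = y.
Proof.
  destruct (cover y) as [i [Hi Hy]]. rewrite <- (hg i y Hi Hy). apply W_edge; auto.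
Qed.

Definition cidx (x : X) : nat := proj1_sig (constructive_indefinite_description _ (cover x)).
Lemma cidx_spec x : (cidx x < r)%nat /\ E (cidx x) x.
Proof. unfold cidx. destruct constructive_indefinite_description; auto. Qed.

Definition F (x : X) : X := W (g (cidx x) x).

Lemma F_edge i t : (i < r)%nat -> 0 <= t <= 1 -> F (h i t) = W t.
Proof.
  intros Hi Ht. unfold F. destruct (cidx_spec (h i t)) as [Hj Hej].
  set (j := cidx (h i t)) in *.
  destruct (Nat.eq_dec j i) as [->|Hne]. rewrite gh; auto.
  destruct (inter j i (h i t) Hj Hi Hne Hej (hE i t Hi Ht)) as [Hxj Hxi].
  assert (Ht01 : t = 0 \/ t = 1).
  { destruct Hxi as [H|H]; [left|right]; rewrite <- (gh i t Hi Ht), H; apply gh; auto; lra. }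
  assert (Hg01 : g j (h i t) = 0 \/ g j (h i t) = 1).
  { destruct Hxj as [H|H]; [left|right]; rewrite H; apply gh; auto; lra. }
  destruct Ht01 as [->| ->]; destruct Hg01 as [-> | ->]; rewrite ?W0, ?W1; auto.
Qed.

Lemma F_pt i x : (i < r)%nat -> E i x -> F x = W (g i x).
Proof. intros Hi Hx. rewrite <- (hg i x Hi Hx) at 1. apply F_edge; auto. Qed.

Lemma F_cont : continuous d F.
Proof.
  intros x eps He.
  destruct (finite_delta (fun j a => forall y, E j y -> d x y < a -> d (F x) (F y) < eps) r) as [a [Ha Hq]].
  - intros j a b H1 Hb Hba y Hy Hd. apply H1; auto. lra.
  - intros j Hj. destruct (classic (E j x)) as [Hx|Hx].
    + destruct (W_cont (g j x) eps) as [d1 [Hd1 H1]]; auto.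
      destruct (gc j x d1 Hj Hx Hd1) as [d2 [Hd2 H2]].
      exists d2. split; auto. intros y Hy Hd.
      rewrite (F_pt j x), (F_pt j y); auto.
    + destruct (away_edge j x Hj Hx) as [a [Ha Ha']]. exists a. split; auto.
      intros y Hy Hd. specialize (Ha' y Hy). lra.
  - exists a. split; auto. intros y Hy. destruct (cover y) as [j [Hj Hey]]. apply (Hq j Hj y Hey Hy).
Qed.

Definition cyl (n j : nat) (s : R) := (INR j + s) / INR M ^ n.
Lemma MRn_pos n : 0 < INR M ^ n.
Proof. apply pow_lt, MRpos. Qed.
Lemma Mn_pos n : (0 < M ^ n)%nat.
Proof. pose proof (Nat.pow_nonzero M n). pose proof HM2. lia. Qed.
Lemma cyl_rng n j s : (j < M ^ n)%nat -> 0 <= s <= 1 -> 0 <= cyl n j s <= 1.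
Proof.
  intros Hj Hs. unfold cyl. pose proof (MRn_pos n).
  assert (INR j + 1 <= INR M ^ n). { rewrite <- pow_INR, <- S_INR. apply le_INR. lia. }
  pose proof (pos_INR j). split.
  apply Rmult_le_pos. lra. left; apply Rinv_0_lt_compat; lra.
  apply Rmult_le_reg_r with (INR M ^ n); auto. unfold Rdiv. rewrite Rmult_assoc, Rinv_l by lra. lra.
Qed.

Lemma cyl_map n : forall i j, (i < r)%nat -> (j < M ^ n)%nat ->
  exists e o, (e < r)%nat /\ forall s, 0 <= s <= 1 -> iter n F (h i (cyl n j s)) = h e (orr o s).
Proof.
  induction n as [|n IH]; intros i j Hi Hj.
  - simpl in Hj. assert (j = O) by lia. subst. exists i, true. split; auto. intros s Hs.
    simpl. unfold cyl. f_equal. simpl. field.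
  - set (N := (M ^ n)%nat) in *.
    assert (HN : (0 < N)%nat) by apply Mn_pos.
    assert (HMN : (M ^ S n = M * N)%nat) by (apply Nat.pow_succ_r; lia).
    set (k := (j / N)%nat). set (j' := (j mod N)%nat).
    assert (Hjd : j = (N * k + j')%nat) by (apply Nat.div_mod; lia).
    assert (Hj' : (j' < N)%nat) by (apply Nat.mod_upper_bound; lia).
    assert (Hk : (k < M)%nat). { apply Nat.Div0.div_lt_upper_bound. lia. }
    assert (Hcyl : forall s, cyl (S n) j s = (INR k + cyl n j' s) / INR M).
    { intros s. unfold cyl. rewrite Hjd, plus_INR, mult_INR. unfold N. rewrite pow_INR.
      simpl. pose proof (MRn_pos n). pose proof MRpos. field. lra. }
    assert (HF : forall s, 0 <= s <= 1 -> F (h i (cyl (S n) j s)) = seg (w k) (cyl n j' s)).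
    { intros s Hs. rewrite Hcyl. rewrite F_edge.
      - apply W_piece; auto. apply cyl_rng; auto.
      - auto.
      - rewrite <- Hcyl. apply cyl_rng; auto. }
    assert (He1 : (fst (w k) < r)%nat) by (apply Hwr; auto).
    destruct (snd (w k)) eqn:Ho.
    + destruct (IH (fst (w k)) j' He1 Hj') as [e [o [He Hs]]].
      exists e, o. split; auto. intros s Hs'. rewrite iter_S_r, HF by auto.
      unfold seg. rewrite Ho. simpl. apply Hs; auto.
    + set (j'' := (N - 1 - j')%nat).
      destruct (IH (fst (w k)) j'' He1 ltac:(unfold j''; lia)) as [e [o [He Hs]]].
      exists e, (negb o). split; auto. intros s Hs'. rewrite iter_S_r, HF by auto.
      unfold seg. rewrite Ho. simpl.
      assert (E1 : 1 - cyl n j' s = cyl n j'' (1 - s)).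
      { unfold cyl. assert (Hn : (j'' + j' + 1 = N)%nat) by (unfold j''; lia).
        apply (f_equal INR) in Hn. rewrite !plus_INR in Hn. unfold N in Hn. rewrite pow_INR in Hn.
        simpl in Hn. pose proof (MRn_pos n). field_simplify; [|lra|lra]. f_equal. lra. }
      rewrite E1, Hs by lra. f_equal. destruct o; simpl; ring.
Qed.

Lemma cyl_onto n i j y : (i < r)%nat -> (j < M ^ n)%nat ->
  exists s, 0 <= s <= 1 /\ iter (S n) F (h i (cyl n j s)) = y.
Proof.
  intros Hi Hj. destruct (cyl_map n i j Hi Hj) as [e [o [He Hs]]].
  destruct (W_onto y) as [tau [Ht Hy]].
  exists (orr o tau). split. apply orr_rng; auto.
  simpl. rewrite Hs by (apply orr_rng; auto). rewrite orr_inv, F_edge; auto.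
Qed.

Lemma pow_ge n : INR n + 1 <= INR M ^ n.
Proof.
  induction n as [|n IH]. simpl; lra.
  rewrite S_INR. simpl. assert (2 <= INR M). { replace 2 with (INR 2) by (simpl; ring). apply le_INR, HM2. }
  pose proof (pos_INR n). nra.
Qed.

Lemma cyl_in c del : 0 <= c <= 1 -> 0 < del ->
  exists n j, (j < M ^ n)%nat /\ forall s, 0 <= s <= 1 -> Rabs (cyl n j s - c) < del.
Proof.
  intros Hc Hd. destruct (archimed_cor1 del Hd) as [n [Hn Hn0]].
  pose proof (pow_ge n). pose proof (MRn_pos n).
  assert (HnR : 0 < INR n) by (apply lt_0_INR; auto).
  assert (Hsm : INR (S (M ^ n - 1)) = INR M ^ n).
  { rewrite <- pow_INR. f_equal. pose proof (Mn_pos n). lia. }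
  destruct (approx_nat (M ^ n - 1) (c * INR M ^ n)) as [j [Hj Hj']].
  { rewrite Hsm. split; nra. }
  exists n, j. split. pose proof (Mn_pos n); lia.
  intros s Hs. unfold cyl.
  replace ((INR j + s) / INR M ^ n - c) with ((INR j + s - c * INR M ^ n) / INR M ^ n) by (field; lra).
  unfold Rdiv. rewrite Rabs_mult, (Rabs_right (/ _)) by (left; apply Rinv_0_lt_compat; lra).
  assert (Rabs (INR j + s - c * INR M ^ n) <= 1) by (unfold Rabs; destruct Rcase_abs; lra).
  assert (/ INR M ^ n < / INR n). { apply Rinv_lt_contravar; nra. }
  assert (0 < / INR M ^ n) by (apply Rinv_0_lt_compat; lra).
  pose proof (Rabs_pos (INR j + s - c * INR M ^ n)). nra.
Qed.

Lemma open_cyl U u : is_open d U -> U u ->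
  exists i n j, (i < r)%nat /\ (j < M ^ n)%nat /\ forall s, 0 <= s <= 1 -> U (h i (cyl n j s)).
Proof.
  intros HU Hu. destruct (HU u Hu) as [eps [He Hb]].
  destruct (cover u) as [i [Hi Hui]].
  destruct (hc i (g i u) eps Hi (gE i u Hi Hui) He) as [del [Hd Hh]].
  destruct (cyl_in (g i u) del (gE i u Hi Hui) Hd) as [n [j [Hj Hs]]].
  exists i, n, j. split; auto. split; auto. intros s Hs'. apply Hb.
  rewrite <- (hg i u Hi Hui) at 1. apply Hh; auto. apply cyl_rng; auto.
Qed.

Lemma F_dense_periodic : dense_periodic d F.
Proof.
  intros U HU [u Hu]. destruct (open_cyl U u HU Hu) as [i [n [j [Hi [Hj HUc]]]]].
  destruct (cyl_map n i j Hi Hj) as [e [o [He Hs]]].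
  destruct (Hcov i Hi) as [p [Hp Hfp]].
  set (op := snd (w p)).
  set (f := fun u => cyl n j (orr o ((INR p + u) / INR M)) - orr op u).
  pose proof MRpos. pose proof (MRn_pos n).
  assert (Htau : forall u, 0 <= u <= 1 -> 0 <= (INR p + u) / INR M <= 1).
  { intros u0 Hu0. assert (INR p + 1 <= INR M). { rewrite <- S_INR. apply le_INR. lia. }
    pose proof (pos_INR p). split. apply Rmult_le_pos. lra. left; apply Rinv_0_lt_compat; lra.
    apply Rmult_le_reg_r with (INR M); auto. unfold Rdiv. rewrite Rmult_assoc, Rinv_l by lra. lra. }
  destruct (IVT_cor f 0 1) as [us [Hus Hf]].
  - unfold f, cyl, orr. destruct o, op; reg.
  - lra.
  - unfold f. pose proof (cyl_rng n j (orr o ((INR p + 0) / INR M)) Hj (orr_rng _ _ (Htau 0 ltac:(lra)))).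
    pose proof (cyl_rng n j (orr o ((INR p + 1) / INR M)) Hj (orr_rng _ _ (Htau 1 ltac:(lra)))).
    unfold orr at 2 4. destruct op; nra.
  - set (s := orr o ((INR p + us) / INR M)).
    assert (Hs01 : 0 <= s <= 1) by (apply orr_rng; auto).
    exists (h i (cyl n j s)). split. apply HUc; auto.
    exists (S n). split. lia.
    simpl. rewrite Hs by auto. unfold s. rewrite orr_inv, F_edge by auto.
    rewrite W_piece by auto. unfold seg. rewrite Hfp. f_equal. unfold f in Hf. cbv beta in Hf. fold op. lra.
Qed.

Lemma Hr0 : (0 < r)%nat. Proof. lia. Qed.

Lemma F_onto : onto F.
Proof.
  intros y. destruct (cyl_onto 0 0 0 y Hr0 ltac:(simpl; lia)) as [s [Hs Hy]].
  exists (h 0%nat (cyl 0 0 s)). exact Hy.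
Qed.

Lemma F_trans : top_transitive d F.
Proof.
  intros U V HU HV [u Hu] [v Hv].
  destruct (open_cyl U u HU Hu) as [i [n [j [Hi [Hj HUc]]]]].
  destruct (cyl_onto n i j v Hi Hj) as [s [Hs Hy]].
  exists (S n). split. lia. exists (h i (cyl n j s)). split; auto. rewrite Hy; auto.
Qed.

Lemma F_sens : sensitive d F.
Proof.
  set (a := h 0%nat 0). set (b := h 0%nat 1).
  assert (Hab : a <> b).
  { intros E1. assert (g 0%nat a = g 0%nat b) by (rewrite E1; auto).
    unfold a, b in H. rewrite !gh in H; try lra; apply Hr0. }
  pose proof (d_neq X d Hm a b Hab) as Hd.
  exists (d a b / 3). split. lra.
  intros x N [eps [He HN]].
  set (U := fun y => d x y < eps).
  assert (HU : is_open d U).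
  { intros y Hy. exists (eps - d x y). split. unfold U in Hy; lra.
    intros z Hz. unfold U. pose proof (d_tri X d Hm x y z). lra. }
  destruct (open_cyl U x HU ltac:(unfold U; rewrite d_refl; auto)) as [i [n [j [Hi [Hj HUc]]]]].
  set (z := iter (S n) F x).
  destruct (Rlt_dec (d a b / 3) (d z a)) as [Hza|Hza].
  - destruct (cyl_onto n i j a Hi Hj) as [s [Hs Hy]].
    exists (h i (cyl n j s)), (S n). split. apply HN, HUc; auto. fold z. rewrite Hy. lra.
  - destruct (cyl_onto n i j b Hi Hj) as [s [Hs Hy]].
    exists (h i (cyl n j s)), (S n). split. apply HN, HUc; auto. fold z. rewrite Hy.
    pose proof (d_tri X d Hm a z b). rewrite (d_sym X d Hm a z) in H. lra.
Qed.

Lemma iter_cont n : continuous d (iter n F).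
Proof.
  induction n as [|n IH]; intros x eps He.
  - exists eps. split; auto.
  - simpl. destruct (F_cont (iter n F x) eps He) as [d1 [Hd1 H1]].
    destruct (IH x d1 Hd1) as [d2 [Hd2 H2]]. exists d2. split; auto.
Qed.

Lemma refine a b (V : X -> Prop) : 0 <= a /\ a < b /\ b <= 1 -> is_open d V -> (exists v, (V v : Prop)) ->
  exists a' b' N, a <= a' /\ a' < b' /\ b' <= b /\ forall s, a' <= s <= b' -> V (iter N F (h 0%nat s)).
Proof.
  intros Hab HV [v Hv].
  destruct (cyl_in ((a + b) / 2) ((b - a) / 2)) as [n [j [Hj Hc]]]. lra. lra.
  destruct (cyl_onto n 0 j v Hr0 Hj) as [s0 [Hs0 Hy]].
  set (t0 := cyl n j s0). specialize (Hc s0 Hs0). fold t0 in Hc.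
  assert (Ht0 : a < t0 < b) by (unfold Rabs in Hc; destruct Rcase_abs in Hc; lra).
  destruct (HV v Hv) as [eps [He Hb]].
  destruct (iter_cont (S n) (h 0%nat t0) eps He) as [d1 [Hd1 H1]].
  destruct (hc 0%nat t0 d1 Hr0 ltac:(lra) Hd1) as [d2 [Hd2 H2]].
  exists (Rmax a (t0 - d2 / 2)), (Rmin b (t0 + d2 / 2)), (S n).
  pose proof (Rmax_l a (t0 - d2/2)). pose proof (Rmax_r a (t0 - d2/2)).
  pose proof (Rmin_l b (t0 + d2/2)). pose proof (Rmin_r b (t0 + d2/2)).
  split; [auto|]. split. { unfold Rmax, Rmin. repeat destruct Rle_dec; lra. } split; [auto|].
  intros s [Hs1 Hs2]. apply Hb. fold t0 in Hy. rewrite <- Hy. apply H1. apply H2. lra.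
  unfold Rabs; destruct Rcase_abs; lra.
Qed.

Definition tgt (m : nat) : X -> Prop :=
  fun y => d (h (fst (Cantor.of_nat m)) (cyl (fst (Cantor.of_nat (snd (Cantor.of_nat m))))
                 (fst (Cantor.of_nat (snd (Cantor.of_nat (snd (Cantor.of_nat m)))))) 0)) y
     < / INR (S (snd (Cantor.of_nat (snd (Cantor.of_nat (snd (Cantor.of_nat m))))))).

Lemma ball_open c e : is_open d (fun y => d c y < e).
Proof.
  intros y Hy. exists (e - d c y). split. lra.
  intros z Hz. pose proof (d_tri X d Hm c y z). lra.
Qed.

Lemma tgt_open m : is_open d (tgt m).
Proof. apply ball_open. Qed.
Lemma tgt_ne m : exists y, tgt m y.
Proof. eexists. unfold tgt. rewrite (d_refl X d Hm). apply Rinv_0_lt_compat, lt_0_INR. lia. Qed.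

Lemma tgt_in U u : is_open d U -> U u -> exists m, forall y, tgt m y -> U y.
Proof.
  intros HU Hu. destruct (HU u Hu) as [eps [He Hb]].
  destruct (open_cyl (fun y => d u y < eps / 2) u (ball_open u (eps / 2)) ltac:(cbv beta; rewrite (d_refl X d Hm); lra))
    as [i [n [j [Hi [Hj Hc]]]]].
  destruct (archimed_cor1 (eps / 2)) as [k0 [Hk0 Hk0']]. lra.
  exists (Cantor.to_nat (i, Cantor.to_nat (n, Cantor.to_nat (j, (k0 - 1)%nat)))).
  intros y Hy. unfold tgt in Hy. repeat (rewrite Cantor.cancel_of_to in Hy; cbn [fst snd] in Hy).
  replace (S (k0 - 1)) with k0 in Hy by lia.
  apply Hb. specialize (Hc 0 ltac:(lra)).
  pose proof (d_tri X d Hm u (h i (cyl n j 0)) y). cbv beta in Hc. lra.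
Qed.

Lemma refine_ex (p : R * R) (m : nat) : exists q : (R * R) * nat,
  (0 <= fst p < snd p /\ snd p <= 1 -> fst p <= fst (fst q) < snd (fst q) /\ snd (fst q) <= snd p /\
     forall s, fst (fst q) <= s <= snd (fst q) -> tgt m (iter (snd q) F (h 0%nat s))).
Proof.
  destruct (classic (0 <= fst p < snd p /\ snd p <= 1)) as [H|H].
  - destruct (refine (fst p) (snd p) (tgt m)) as [a' [b' [N [H1 [H2 [H3 H4]]]]]].
    lra. apply tgt_open. apply tgt_ne.
    exists ((a', b'), N). intros _. simpl. split; [lra|]. split; [lra|]. exact H4.
  - exists ((0, 0), O). intros; contradiction.
Qed.

Definition nxt p m := proj1_sig (constructive_indefinite_description _ (refine_ex p m)).
Lemma nxt_spec p m : 0 <= fst p < snd p /\ snd p <= 1 ->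
  fst p <= fst (fst (nxt p m)) < snd (fst (nxt p m)) /\ snd (fst (nxt p m)) <= snd p /\
     forall s, fst (fst (nxt p m)) <= s <= snd (fst (nxt p m)) -> tgt m (iter (snd (nxt p m)) F (h 0%nat s)).
Proof. unfold nxt. destruct constructive_indefinite_description; simpl; auto. Qed.

Fixpoint ab (m : nat) : R * R := match m with O => (0, 1) | S m' => fst (nxt (ab m') m') end.

Lemma ab_ok m : 0 <= fst (ab m) < snd (ab m) /\ snd (ab m) <= 1.
Proof.
  induction m as [|m IH]. simpl; lra.
  simpl. destruct (nxt_spec (ab m) m IH) as [A [B _]]. lra.
Qed.

Lemma ab_mono k m : (k <= m)%nat -> fst (ab k) <= fst (ab m) /\ snd (ab m) <= snd (ab k).
Proof.
  induction 1 as [|m Hkm IH]. lra.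
  simpl. destruct (nxt_spec (ab m) m (ab_ok m)) as [A [B _]]. lra.
Qed.

Lemma F_dense_orbit : has_dense_orbit d F.
Proof.
  destruct (completeness (fun x => exists m, x = fst (ab m))) as [st [Hub Hlub]].
  - exists 1. intros x [m ->]. pose proof (ab_ok m). lra.
  - exists 0, O. auto.
  - assert (Hin : forall m, fst (ab m) <= st <= snd (ab m)).
    { intros m. split. apply Hub. exists m; auto.
      apply Hlub. intros x [k ->]. destruct (Nat.le_ge_cases k m).
      - destruct (ab_mono k m H). pose proof (ab_ok m). lra.
      - destruct (ab_mono m k H). pose proof (ab_ok k). lra. }
    exists (h 0%nat st). intros U HU [u Hu].
    destruct (tgt_in U u HU Hu) as [m Hm'].
    exists (snd (nxt (ab m) m)). apply Hm'.
    destruct (nxt_spec (ab m) m (ab_ok m)) as [_ [_ H]]. apply H.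
    apply (Hin (S m)).
Qed.

End Dyn.

Lemma main_sec : exists F : X -> X,
    continuous d F /\ onto F /\ top_transitive d F /\ has_dense_orbit d F /\
    dense_periodic d F /\ chaotic d F.
Proof.
  destruct walk_exists as [w [M [Hw Hc]]].
  exists (F w M).
  assert (A1 := F_cont w M Hw).
  assert (A2 := F_onto w M Hw Hc).
  assert (A3 := F_trans w M Hw Hc).
  assert (A4 := F_dense_orbit w M Hw Hc).
  assert (A5 := F_dense_periodic w M Hw Hc).
  assert (A6 := F_sens w M Hw Hc).
  unfold chaotic. tauto.
Qed.

End Graph.

Definition arc_props {X : Type} (d : X -> X -> R) (A : X -> Prop) (a b : X) (h : R -> X) (g : X -> R) : Prop :=
    (forall t, 0 <= t <= 1 -> A (h t)) /\
    (forall x, A x -> 0 <= g x <= 1) /\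
    (forall t, 0 <= t <= 1 -> g (h t) = t) /\
    (forall x, A x -> h (g x) = x) /\
    (forall t eps, 0 <= t <= 1 -> 0 < eps -> exists delta, 0 < delta /\
       forall s, 0 <= s <= 1 -> Rabs (s - t) < delta -> d (h t) (h s) < eps) /\
    (forall x eps, A x -> 0 < eps -> exists delta, 0 < delta /\
       forall y, A y -> d x y < delta -> Rabs (g y - g x) < eps) /\
    h 0 = a /\ h 1 = b.

Theorem mainTheorem10 (X : Type) (d : X -> X -> R)
  (Hcont : is_continuum d) (Hgraph : is_finite_graph d) :
  exists F : X -> X,
    continuous d F /\ onto F /\ top_transitive d F /\ has_dense_orbit d F /\
    dense_periodic d F /\ chaotic d F.
Proof.
  destruct Hcont as [Hm [[x0 _] [_ Hconn]]].
  destruct Hgraph as [r [E [a [b [r1 [Harc [Hcov Hint]]]]]]].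
  assert (Hch : forall i, exists p : (R -> X) * (X -> R),
             (i < r)%nat -> arc_props d (E i) (a i) (b i) (fst p) (snd p)).
  { intros i. destruct (Nat.lt_ge_cases i r) as [Hi|Hi].
    - destruct (Harc i Hi) as [hh [gg Hp]]. exists (hh, gg). intros _. exact Hp.
    - exists (fun _ => x0, fun _ => 0). intros; lia. }
  set (hh := fun i => fst (proj1_sig (constructive_indefinite_description _ (Hch i)))).
  set (gg := fun i => snd (proj1_sig (constructive_indefinite_description _ (Hch i)))).
  assert (HP : forall i, (i < r)%nat -> arc_props d (E i) (a i) (b i) (hh i) (gg i)).
  { intros i Hi. unfold hh, gg. destruct constructive_indefinite_description as [p Hp]. simpl. auto. }
  apply (main_sec X d Hm Hconn r E hh gg r1).
  - intros i t Hi Ht. apply (HP i Hi); auto.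
  - intros i x Hi Hx. apply (HP i Hi); auto.
  - intros i t Hi Ht. apply (HP i Hi); auto.
  - intros i x Hi Hx. apply (HP i Hi); auto.
  - intros i t eps Hi Ht He. apply (HP i Hi); auto.
  - intros i x eps Hi Hx He. apply (HP i Hi); auto.
  - exact Hcov.
  - intros i j x Hi Hj Hij Hx1 Hx2.
    destruct (HP i Hi) as [_ [_ [_ [_ [_ [_ [Ha1 Hb1]]]]]]].
    destruct (HP j Hj) as [_ [_ [_ [_ [_ [_ [Ha2 Hb2]]]]]]].
    rewrite Ha1, Hb1, Ha2, Hb2. apply Hint; auto.
Qed.
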